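(* For quantum states $\rho,\sigma\in\mathbb{C}^{d\times d}$, $D_{KL}(\rho\|\sigma) \le \bigl(2 + D_\infty(\rho\|\sigma)\bigr)\cdot D_H^2(\rho\|\sigma)$.
   Context: $D_{KL}(\rho\|\sigma) = \mathrm{tr}(\rho(\ln\rho-\ln\sigma))$. The quantum Hellinger distance squared is $D_H^2(\rho\|\sigma) = \mathrm{tr}((\sqrt\rho - \sqrt\sigma)^2) = 2(1 - \mathrm{tr}(\sqrt\rho\sqrt\sigma))$. With spectral decompositions $\rho = \sum_i p_i|\varphi_i\rangle\langle\varphi_i|$, $\sigma = \sum_j q_j|\psi_j\rangle\langle\psi_j|$, the conventional quantum $\infty$-Rényi divergence is $D_\infty(\rho\|\sigma) = \max\{\ln(p_i/q_j) : p_i|\langle\varphi_i|\psi_j\rangle|^2 \ne 0\}$ (equal to $+\infty$ if some such pair has $q_j = 0$); it is the $\alpha\to\infty$ case of $D_\alpha(\rho\|\sigma) = \frac{1}{\alpha-1}\ln\mathrm{tr}(\rho^\alpha\sigma^{1-\alpha})$. *)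

(* Defs.v *)
From HB Require Import structures.
From mathcomp Require Import all_boot all_order all_algebra.
From mathcomp Require Import complex.
From mathcomp Require Import all_classical all_reals all_analysis.
Set Implicit Arguments. Unset Strict Implicit. Unset Printing Implicit Defensive.
Import Order.TTheory GRing.Theory Num.Theory.
Local Open Scope ring_scope.

Section Quantum.
Variables (R : realType) (d : nat).
Local Notation C := R[i].

Definition adjm (m n : nat) (A : 'M[C]_(m, n)) : 'M[C]_(n, m) :=
  (map_mx (@conjc R) A)^T.

Definition unitary (U : 'M[C]_d) : Prop := U *m adjm U = 1%:M.

Definition is_state (rho : 'M[C]_d) : Prop :=
  [/\ adjm rho = rho,
      (forall v : 'cV[C]_d, 0 <= (adjm v *m rho *m v) 0 0)
    & \tr rho = 1].

(* rho = U diag(p) U^*, i.e. rho = sum_i p_i |phi_i><phi_i| with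
   phi_i the i-th column of the unitary U. *)
Definition spectral_dec (rho U : 'M[C]_d) (p : 'I_d -> R) : Prop :=
  unitary U /\ rho = U *m diag_mx (\row_i ((p i)%:C)%C) *m adjm U.

Definition mat_fun (f : R -> R) (U : 'M[C]_d) (p : 'I_d -> R) : 'M[C]_d :=
  U *m diag_mx (\row_i ((f (p i))%:C)%C) *m adjm U.

Definition overlap (U V : 'M[C]_d) (i j : 'I_d) : R :=
  let z := (adjm U *m V) i j in (complex.Re z) ^+ 2 + (complex.Im z) ^+ 2.

(* Umegaki relative entropy tr(rho (ln rho - ln sigma)), with the usual
   conventions (ln taken on the support, 0 ln 0 = 0; mathcomp's ln 0 = 0),
   and +oo when supp rho is not contained in supp sigma (ker sigma not in ker rho). *)
Definition D_KL (rho sigma U V : 'M[C]_d) (p q : 'I_d -> R) : \bar R :=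
  if `[< forall v : 'cV[C]_d, sigma *m v = 0 -> rho *m v = 0 >]
  then (complex.Re (\tr (rho *m (mat_fun (@ln R) U p - mat_fun (@ln R) V q))))%:E
  else +oo%E.

Definition D_H2 (U V : 'M[C]_d) (p q : 'I_d -> R) : R :=
  complex.Re (\tr ((mat_fun (@Num.sqrt R) U p - mat_fun (@Num.sqrt R) V q) ^+ 2)).

(* D_infty = max { ln(p_i/q_j) : p_i |<phi_i|psi_j>|^2 <> 0 }, +oo if some such
   pair has q_j = 0 (for a state the set of such pairs is nonempty). *)
Definition D_inf (U V : 'M[C]_d) (p q : 'I_d -> R) : \bar R :=
  \big[Order.max/-oo%E]_(i < d) \big[Order.max/-oo%E]_(j < d)
    (if p i * overlap U V i j != 0 then
       (if q j == 0 then +oo%E else (@ln R (p i / q j))%:E)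
     else -oo%E).

End Quantum.

(* Main.v *)
Require Import Defs.
From HB Require Import structures.
From mathcomp Require Import all_boot all_order all_algebra.
From mathcomp Require Import complex.
From mathcomp Require Import all_classical all_reals all_analysis.
From mathcomp Require Import ring lra.
Import Order.TTheory GRing.Theory Num.Theory.
Local Open Scope ring_scope.

Section S.
Variable R : realType.

Lemma ln_le_sub1 (x : R) : 0 < x -> ln x <= x - 1.
Proof.
move=> x0; have := @le_ln1Dx R (x - 1).
have -> : 1 + (x - 1) = x by rewrite addrC subrK.
apply; lra.
Qed.

Lemma lnA (s : R) : 1 <= s -> 2 * s * ln s <= s ^+ 2 - 1.
Proof.
move=> s1.
pose f : R -> R := (fun x : R => x ^+ 2) - cst 1 - (2 : R) *: ((@id R) * (@ln R)).
have D (x : R) : 0 < x -> is_derive x 1 f (2 * x - 2 * (ln x + 1)).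
  move=> x0; have Hl := is_derive1_ln x0.
  rewrite /f; apply: is_derive_eq.
  rewrite /GRing.scale /= mulfV ?gt_eqF //; ring.
have dv : {in `[1, s], forall x, derivable f x 1}.
  move=> x; rewrite in_itv /= => /andP[x1 _].
  by have := D x (lt_le_trans ltr01 x1) => [[]].
have := @ger0_derive1_le_cc R f 1 s _ _ (derivable_within_continuous dv) 1 s.
have fE (x : R) : f x = x ^+ 2 - 1 - 2 * x * ln x.
  by rewrite /f !fctE /GRing.scale /= mulrA.
rewrite !fE ln1 expr1n mulr0 !subrr => H.
suff: 0 <= s ^+ 2 - 1 - 2 * s * ln s by lra.
apply: H.
- move=> x; rewrite in_itv /= => /andP[x1 xs]; apply: dv.
  by rewrite in_itv /= !ltW.
- move=> x; rewrite in_itv /= => /andP[x1 xs].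
  have x0 : 0 < x by lra.
  have Dx := D x x0; rewrite derive1E derive_val.
  have := @ln_le_sub1 x x0; lra.
- by rewrite in_itv /= lexx s1.
- by rewrite in_itv /= lexx s1.
- exact: s1.
Qed.

Lemma lnB (s : R) : 0 < s -> s <= 1 -> (s + 1) * ln s <= 2 * (s - 1).
Proof.
move=> s0 s1.
pose f : R -> R := (fun x : R => 2 * x) - cst 2 - ((@id R) + cst 1) * (@ln R).
have D (x : R) : 0 < x -> is_derive x 1 f (1 - x^-1 - ln x).
  move=> x0; have Hl := is_derive1_ln x0.
  rewrite /f; apply: is_derive_eq.
  rewrite /GRing.scale /= !fctE mulr1 addr0 mulrDl mulfV ?gt_eqF //; ring.
have dv : {in `[s, 1], forall x, derivable f x 1}.
  move=> x; rewrite in_itv /= => /andP[x1 _].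
  by have := D x (lt_le_trans s0 x1) => [[]].
have := @ler0_derive1_le_cc R f s 1 _ _ (derivable_within_continuous dv) 1 s.
have fE (x : R) : f x = 2 * x - 2 - (x + 1) * ln x.
  by rewrite /f !fctE.
rewrite !fE ln1 mulr0 mulr1 subrr subr0 => H.
suff: 0 <= 2 * s - 2 - (s + 1) * ln s by lra.
apply: H.
- move=> x; rewrite in_itv /= => /andP[x1 xs]; apply: dv.
  by rewrite in_itv /= !ltW.
- move=> x; rewrite in_itv /= => /andP[x1 xs].
  have x0 : 0 < x by lra.
  have Dx := D x x0; rewrite derive1E derive_val.
  have xi0 : 0 < x^-1 by rewrite invr_gt0.
  have := @ln_le_sub1 _ xi0; rewrite lnV ?posrE //; lra.
- by rewrite in_itv /= lexx s1.
- by rewrite in_itv /= lexx s1.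
- exact: s1.
Qed.

Lemma core_s (s u L : R) : 0 < s -> 0 <= L -> 2 * u <= L -> u = ln s ->
  s ^+ 2 * (2 * u) - s ^+ 2 + 1 <= (2 + L) * (s - 1) ^+ 2.
Proof.
move=> s0 L0 uL hu.
have hL : 0 <= (L - 2 * u) * (s - 1) ^+ 2 by rewrite mulr_ge0 ?sqr_ge0 // subr_ge0.
have [s1|s1] := lerP 1 s.
  have h := @lnA s s1; rewrite -hu in h.
  have u0 : 0 <= u by rewrite hu ln_ge0.
  have h1 : 0 <= (s ^+ 2 - 1 - 2 * s * u) * (2 * s - 1) by rewrite mulr_ge0 //; lra.
  have h3 : 0 <= (s - 1) ^+ 3 by rewrite exprn_ge0 // subr_ge0.
  have key : s * (2 * u * (2 * s - 1)) <= s * ((s - 1) * (3 * s - 1)).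
    have -> : s * ((s - 1) * (3 * s - 1)) = (s ^+ 2 - 1) * (2 * s - 1) + (s - 1) ^+ 3 by ring.
    have -> : s * (2 * u * (2 * s - 1)) = (2 * s * u) * (2 * s - 1) by ring.
    lra.
  rewrite ler_pM2l // in key.
  have -> : (2 + L) * (s - 1) ^+ 2 = (2 + 2 * u) * (s - 1) ^+ 2 + (L - 2 * u) * (s - 1) ^+ 2 by ring.
  have -> : s ^+ 2 * (2 * u) - s ^+ 2 + 1 = (2 + 2 * u) * (s - 1) ^+ 2 + (2 * u * (2 * s - 1) - (s - 1) * (3 * s - 1)) by ring.
  lra.
have h := @lnB s s0 (ltW s1); rewrite -hu in h.
have h1 : 0 <= (2 * (s - 1) - (s + 1) * u) * (2 * s ^+ 2) by rewrite mulr_ge0 ?mulr_ge0 ?sqr_ge0 //; lra.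
have h3 : 0 <= (1 - s) ^+ 3 by rewrite exprn_ge0 // subr_ge0 ltW.
have key : (s + 1) * (2 * s ^+ 2 * u) <= (s + 1) * ((s - 1) * (3 * s - 1)).
  have -> : (s + 1) * ((s - 1) * (3 * s - 1)) = 4 * s ^+ 2 * (s - 1) + (1 - s) ^+ 3 by ring.
  have -> : (s + 1) * (2 * s ^+ 2 * u) = 4 * s ^+ 2 * (s - 1) - (2 * (s - 1) - (s + 1) * u) * (2 * s ^+ 2) by ring.
  lra.
rewrite ler_pM2l ?addr_gt0 // in key.
have hL0 : 0 <= L * (s - 1) ^+ 2 by rewrite mulr_ge0 ?sqr_ge0.
have -> : (2 + L) * (s - 1) ^+ 2 = 2 * (s - 1) ^+ 2 + L * (s - 1) ^+ 2 by ring.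
have -> : s ^+ 2 * (2 * u) - s ^+ 2 + 1 = 2 * (s - 1) ^+ 2 + (2 * s ^+ 2 * u - (s - 1) * (3 * s - 1)) by ring.
lra.
Qed.


Lemma pair_ineq (p q w L : R) : 0 <= p -> 0 <= q -> 0 <= w -> 0 <= L ->
  (p * w != 0 -> q != 0 /\ ln (p / q) <= L) ->
  w * (p * ln p - p * ln q - p + q)
    <= (2 + L) * (w * (Num.sqrt p - Num.sqrt q) ^+ 2).
Proof.
move=> p0 q0 w0 L0 h.
have [->|wn0] := eqVneq w 0; first by rewrite !mul0r mulr0.
have [pz|pn0] := eqVneq p 0.
  rewrite pz sqrtr0 sub0r sqrrN sqr_sqrtr // !mul0r !subrr add0r.
  have : 0 <= (1 + L) * (w * q) by rewrite mulr_ge0 ?mulr_ge0 //; lra.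
  lra.
have [qn0 hL] := h (mulf_neq0 pn0 wn0).
have pp : 0 < p by rewrite lt_neqAle eq_sym pn0.
have qp : 0 < q by rewrite lt_neqAle eq_sym qn0.
have wp : 0 < w by rewrite lt_neqAle eq_sym wn0.
suff key : p * (ln p - ln q) - p + q <= (2 + L) * (Num.sqrt p - Num.sqrt q) ^+ 2.
  have := ler_wpM2l (ltW wp) key.
  have -> : w * (p * (ln p - ln q) - p + q) = w * (p * ln p - p * ln q - p + q) by ring.
  by move=> H; apply: (le_trans H); rewrite mulrCA.
set a := Num.sqrt p; set b := Num.sqrt q.
have ap : 0 < a by rewrite sqrtr_gt0.
have bp : 0 < b by rewrite sqrtr_gt0.
have pa : p = a ^+ 2 by rewrite sqr_sqrtr.
have qb : q = b ^+ 2 by rewrite sqr_sqrtr.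
have sp : 0 < a / b by rewrite divr_gt0.
have hl : ln p - ln q = 2 * ln (a / b).
  rewrite -ln_div ?posrE // pa qb -expr_div_n lnXn // mulr_natl.
  by rewrite mulr2n.
have hL' : 2 * ln (a / b) <= L.
  by rewrite -hl -ln_div ?posrE.
have := @core_s (a / b) (ln (a / b)) L sp L0 hL' erefl.
move/(ler_wpM2l (ltW (mulr_gt0 bp bp))).
have bn0 : b != 0 by rewrite gt_eqF.
have -> : b * b * ((a / b) ^+ 2 * (2 * ln (a / b)) - (a / b) ^+ 2 + 1)
   = p * (ln p - ln q) - p + q.
  by rewrite hl pa qb; field.
have -> : b * b * ((2 + L) * (a / b - 1) ^+ 2) = (2 + L) * (a - b) ^+ 2.
  by field.
by [].
Qed.

End S.

Section M.
Variables (R : realType) (d : nat).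
Local Notation C := R[i].

Lemma adjm_mul m n k (A : 'M[C]_(m, n)) (B : 'M[C]_(n, k)) :
  adjm (A *m B) = adjm B *m adjm A.
Proof. by rewrite /adjm map_mxM trmx_mul. Qed.

Lemma adjmK m n (A : 'M[C]_(m, n)) : adjm (adjm A) = A.
Proof. by apply/matrixP => i j; rewrite !mxE conjcK. Qed.

Lemma adjmE m n (A : 'M[C]_(m, n)) i j : adjm A i j = (A j i)^*%C.
Proof. by rewrite !mxE. Qed.

Lemma unitaryC (U : 'M[C]_d) : unitary U -> adjm U *m U = 1%:M.
Proof. by move=> h; apply: mulmx1C. Qed.

Lemma mulcJ (z : C) : z * z^*%C = ((complex.Re z) ^+ 2 + (complex.Im z) ^+ 2)%:C%C.
Proof.
case: z => a b /=. rewrite /GRing.mul /= /conjc.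
apply/eqP; rewrite eq_complex /=; apply/andP; split; apply/eqP; ring.
Qed.

Lemma tr_diag_conj (f g : 'I_d -> R) (W : 'M[C]_d) :
  \tr (diag_mx (\row_i (f i)%:C%C) *m W *m diag_mx (\row_j (g j)%:C%C) *m adjm W)
  = \sum_i \sum_j (f i * g j * ((complex.Re (W i j)) ^+ 2 + (complex.Im (W i j)) ^+ 2))%:C%C.
Proof.
rewrite /mxtrace; apply: eq_bigr => i _.
rewrite mxE; apply: eq_bigr => j _.
rewrite mul_mx_diag mul_diag_mx !mxE !rmorphM /=.
rewrite -[_ * W i j * _]mulrA [W i j * _]mulrC -!mulrA; congr (_ * (_ * _)).
exact: mulcJ.
Qed.


Lemma adjm1 : adjm (1%:M : 'M[C]_d) = 1%:M.
Proof.
by apply/matrixP => i j; rewrite !mxE rmorph_nat eq_sym.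
Qed.

Lemma adjm_delta m n (i : 'I_m) (j : 'I_n) :
  adjm (delta_mx i j : 'M[C]_(m, n)) = delta_mx j i.
Proof.
by apply/matrixP => k l; rewrite !mxE rmorph_nat andbC.
Qed.

Lemma tr_cross (f g : R -> R) (U V : 'M[C]_d) (p q : 'I_d -> R) :
  \tr (mat_fun f U p *m mat_fun g V q)
  = \sum_i \sum_j (f (p i) * g (q j) * overlap U V i j)%:C%C.
Proof.
rewrite /mat_fun -!mulmxA mxtrace_mulC -!mulmxA.
set Df := diag_mx _; set Dg := diag_mx _.
have -> : Df *m (adjm U *m (V *m (Dg *m (adjm V *m U))))
   = Df *m (adjm U *m V) *m Dg *m adjm (adjm U *m V).
  by rewrite adjm_mul adjmK !mulmxA.
by rewrite tr_diag_conj.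
Qed.

Lemma overlap_ge0 (U V : 'M[C]_d) i j : 0 <= overlap U V i j.
Proof. by rewrite /overlap addr_ge0 // sqr_ge0. Qed.

Lemma overlapE (U V : 'M[C]_d) i j :
  (overlap U V i j)%:C%C = (adjm U *m V) i j * ((adjm U *m V) i j)^*%C.
Proof. by rewrite mulcJ. Qed.

Lemma overlap_row (U V : 'M[C]_d) i : unitary U -> unitary V ->
  \sum_j overlap U V i j = 1.
Proof.
move=> hU hV; apply: (@complexI R); rewrite rmorph_sum rmorph1 /=.
have : (adjm U *m V *m adjm (adjm U *m V)) i i = 1.
  by rewrite adjm_mul adjmK mulmxA -(mulmxA _ V) hV mulmx1 unitaryC // mxE eqxx.
rewrite mxE => <-; apply: eq_bigr => j _; by rewrite overlapE adjmE.
Qed.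

Lemma overlap_col (U V : 'M[C]_d) j : unitary U -> unitary V ->
  \sum_i overlap U V i j = 1.
Proof.
move=> hU hV; apply: (@complexI R); rewrite rmorph_sum rmorph1 /=.
have : (adjm (adjm U *m V) *m (adjm U *m V)) j j = 1.
  by rewrite adjm_mul adjmK mulmxA -(mulmxA _ U) hU mulmx1 unitaryC // mxE eqxx.
rewrite mxE => <-; apply: eq_bigr => i _; by rewrite overlapE adjmE mulrC.
Qed.

Lemma overlap_same (U : 'M[C]_d) i j : unitary U ->
  overlap U U i j = (i == j)%:R.
Proof.
move=> hU; apply: (@complexI R); rewrite overlapE unitaryC // mxE rmorph_nat.
by case: (i == j); rewrite /= ?mulr1 ?mulr0.
Qed.


Lemma mat_funE (U : 'M[C]_d) (p : 'I_d -> R) :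
  U *m diag_mx (\row_i (p i)%:C%C) *m adjm U = mat_fun id U p.
Proof. by []. Qed.

Lemma tr_mat_fun (f : R -> R) (U : 'M[C]_d) p : unitary U ->
  \tr (mat_fun f U p) = \sum_i (f (p i))%:C%C.
Proof.
move=> hU; rewrite /mat_fun mxtrace_mulC mulmxA unitaryC // mul1mx.
by rewrite /mxtrace; apply: eq_bigr => i _; rewrite !mxE eqxx mulr1n.
Qed.

Lemma state_p_ge0 (rho U : 'M[C]_d) p : is_state rho -> spectral_dec rho U p ->
  forall i, 0 <= p i.
Proof.
move=> [_ hpsd _] [hU hr] i.
have := hpsd (U *m delta_mx i 0).
rewrite adjm_mul adjm_delta hr -!mulmxA (mulmxA (adjm U) U) unitaryC // mul1mx.
rewrite !mulmxA -(mulmxA _ (adjm U)) unitaryC // mulmx1.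
rewrite -rowE -colE !mxE eqxx mulr1n.
by rewrite ler0c.
Qed.

Lemma state_p_sum (rho U : 'M[C]_d) p : is_state rho -> spectral_dec rho U p ->
  \sum_i p i = 1.
Proof.
move=> [_ _ htr] [hU hr]; apply: (@complexI R).
by rewrite rmorph_sum rmorph1 -htr hr mat_funE tr_mat_fun.
Qed.


Lemma support_ok (rho sigma U V : 'M[C]_d) p q :
  spectral_dec rho U p -> spectral_dec sigma V q ->
  (forall i j, p i * overlap U V i j != 0 -> q j != 0) ->
  forall v : 'cV[C]_d, sigma *m v = 0 -> rho *m v = 0.
Proof.
move=> [hU hr] [hV hs] hq v hv.
set x := adjm V *m v.
have hx : diag_mx (\row_j (q j)%:C%C) *m x = 0.
  have := congr1 (mulmx (adjm V)) hv.
  by rewrite hs !mulmxA unitaryC // mul1mx mulmx0 -!mulmxA.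
have hv' : v = V *m x by rewrite /x mulmxA hV mul1mx.
rewrite hr hv' -!mulmxA (mulmxA (adjm U)).
set W := adjm U *m V.
suff -> : diag_mx (\row_i (p i)%:C%C) *m (W *m x) = 0 by rewrite mulmx0.
have hwW : forall i j, overlap U V i j = 0 -> W i j = 0.
  move=> i j hw.
  have : W i j * (W i j)^*%C = 0 by rewrite -overlapE hw rmorph0.
  by move/eqP; rewrite mulf_eq0 fmorph_eq0 orbb => /eqP.
clearbody W x.
apply/matrixP => i k; rewrite mulmxA mul_diag_mx !mxE.
apply: big1 => j _; rewrite !mxE.
have hxj : (q j)%:C%C * x j k = 0.
  by move/matrixP: hx => /(_ j k); rewrite mul_diag_mx !mxE.
have [qj0|qj0] := eqVneq (q j) 0.
  case: (eqVneq (p i * overlap U V i j) 0) => [hP|/hq]; last by rewrite qj0 eqxx.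
  move/eqP: hP; rewrite mulf_eq0 => /orP[/eqP -> | ]; first by rewrite !mul0r.
  by move/eqP => /hwW ->; rewrite mulr0 mul0r.
have : x j k = 0.
  by move/eqP: hxj; rewrite mulf_eq0 (negbTE (_ : (q j)%:C%C != 0)) //= ?(inj_eq (@complexI R)) // => /eqP.
move=> ->; by rewrite mulr0.
Qed.

End M.


Section Sums.
Variables (R : realType) (d : nat).

Lemma sum2D (F G : 'I_d -> 'I_d -> R) :
  \sum_i \sum_j F i j + \sum_i \sum_j G i j = \sum_i \sum_j (F i j + G i j).
Proof. by rewrite -big_split; apply: eq_bigr => i _; rewrite -big_split. Qed.

Lemma sum2B (F G : 'I_d -> 'I_d -> R) :
  \sum_i \sum_j F i j - \sum_i \sum_j G i j = \sum_i \sum_j (F i j - G i j).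
Proof. by rewrite -sumrB; apply: eq_bigr => i _; rewrite -sumrB. Qed.

Lemma sum_delta (F : 'I_d -> R) i : \sum_j F j * (i == j)%:R = F i.
Proof.
rewrite (bigD1 i) //= eqxx mulr1 big1 ?addr0 // => j /negbTE.
by rewrite eq_sym => ->; rewrite mulr0.
Qed.

Lemma sum_row (w : 'I_d -> 'I_d -> R) (F : 'I_d -> R) :
  (forall i, \sum_j w i j = 1) -> \sum_i \sum_j w i j * F i = \sum_i F i.
Proof. by move=> wr; apply: eq_bigr => i _; rewrite -mulr_suml wr mul1r. Qed.

Lemma sum_col (w : 'I_d -> 'I_d -> R) (F : 'I_d -> R) :
  (forall j, \sum_i w i j = 1) -> \sum_i \sum_j w i j * F j = \sum_j F j.
Proof.
by move=> wc; rewrite exchange_big; apply: eq_bigr => j _; rewrite -mulr_suml wc mul1r.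
Qed.

Lemma psum0 (F : 'I_d -> R) : (forall i, 0 <= F i) -> \sum_i F i = 0 ->
  forall i, F i = 0.
Proof. by move=> h s i; apply: (psumr_eq0P _ s) => // j _; exact: h. Qed.

Lemma sum_same_row (F : 'I_d -> R) (w : 'I_d -> 'I_d -> R) :
  (forall i, \sum_j w i j = 1) ->
  \sum_i \sum_j F i * F j * (i == j)%:R = \sum_i \sum_j w i j * (F i * F i).
Proof.
move=> wr; rewrite (sum_row w (fun i => F i * F i) wr).
by apply: eq_bigr => i _; rewrite (sum_delta (fun j => F i * F j)).
Qed.

Lemma sum_same_col (F : 'I_d -> R) (w : 'I_d -> 'I_d -> R) :
  (forall j, \sum_i w i j = 1) ->
  \sum_i \sum_j F i * F j * (i == j)%:R = \sum_i \sum_j w i j * (F j * F j).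
Proof.
move=> wc; rewrite (sum_col w (fun j => F j * F j) wc).
by apply: eq_bigr => i _; rewrite (sum_delta (fun j => F i * F j)).
Qed.

Lemma exists_good (p q : 'I_d -> R) (w : 'I_d -> 'I_d -> R) :
  (forall i, 0 <= p i) -> (forall j, 0 <= q j) -> (forall i j, 0 <= w i j) ->
  \sum_i p i = 1 -> \sum_j q j = 1 ->
  (forall i, \sum_j w i j = 1) -> (forall j, \sum_i w i j = 1) ->
  exists i j, p i * w i j != 0 /\ q j <= p i.
Proof.
move=> p0 q0 w0 ps qs wr wc.
have : [exists i, exists j, (p i * w i j != 0) && (q j <= p i)].
  case: (boolP [exists i, exists j, (p i * w i j != 0) && (q j <= p i)]) => // /existsPn H.
  exfalso.
  have H' : forall i j, p i * w i j != 0 -> p i < q j.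
    move=> i j hP; have /existsPn /(_ j) := H i.
    by rewrite hP /= -ltNge.
  have le : forall i j, 0 <= q j * w i j - p i * w i j.
    move=> i j; rewrite subr_ge0.
    have [hz|hP] := eqVneq (p i * w i j) 0; first by rewrite hz mulr_ge0.
    by rewrite ler_wpM2r // ltW // H'.
  have sum0 : \sum_i \sum_j (q j * w i j - p i * w i j) = 0.
    rewrite -sum2B.
    have -> : \sum_i \sum_j q j * w i j = 1.
      by rewrite -qs -(sum_col w q wc); apply: eq_bigr => i _; apply: eq_bigr => j _; rewrite mulrC.
    have -> : \sum_i \sum_j p i * w i j = 1.
      by rewrite -ps -(sum_row w p wr); apply: eq_bigr => i _; apply: eq_bigr => j _; rewrite mulrC.
    by rewrite subrr.
  have all0 : forall i j, q j * w i j - p i * w i j = 0.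
    move=> i j.
    have hi := @psum0 _ (fun i => sumr_ge0 _ (fun j _ => le i j)) sum0 i.
    exact: (@psum0 _ (fun j => le i j) hi j).
  have : \sum_i \sum_j p i * w i j != 0.
    have -> : \sum_i \sum_j p i * w i j = 1.
      by rewrite -ps -(sum_row w p wr); apply: eq_bigr => i _; apply: eq_bigr => j _; rewrite mulrC.
    exact: oner_neq0.
  apply/negP; rewrite negbK; apply/eqP; apply: big1 => i _; apply: big1 => j _.
  apply/eqP; apply/negPn/negP => hP.
  have hlt := H' i j hP.
  have wpos : 0 < w i j by rewrite lt_neqAle w0 andbT eq_sym; apply: contraNneq hP => ->; rewrite mulr0.
  have := all0 i j; move/eqP; rewrite subr_eq0 => /eqP.
  move/(congr1 (fun x => x / w i j)); rewrite !mulfK ?gt_eqF // => hqp.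
  by move: hlt; rewrite hqp ltxx.
case/existsP => i /existsP [j /andP[h1 h2]]; by exists i, j.
Qed.

End Sums.

Theorem theorem2p32 (R : realType) (d : nat) (rho sigma U V : 'M[R[i]]_d)
  (p q : 'I_d -> R) :
  is_state rho -> is_state sigma ->
  spectral_dec rho U p -> spectral_dec sigma V q ->
  (D_KL rho sigma U V p q <=
     (2%:E + D_inf U V p q) * (D_H2 U V p q)%:E)%E.
Proof.
move=> hsr hss dr ds.
have p0 := @state_p_ge0 _ _ _ _ _ hsr dr; have q0 := @state_p_ge0 _ _ _ _ _ hss ds.
have ps := @state_p_sum _ _ _ _ _ hsr dr; have qs := @state_p_sum _ _ _ _ _ hss ds.
have [hU hr] := dr; have [hV hs] := ds.
have w0 := @overlap_ge0 R d U V.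
have wr i := @overlap_row R d U V i hU hV.
have wc j := @overlap_col R d U V j hU hV.
have ReC (F : 'I_d -> 'I_d -> R) :
    complex.Re (\sum_i \sum_j (F i j)%:C%C) = \sum_i \sum_j F i j.
  by rewrite -(eq_bigr _ (fun i _ => rmorph_sum _ _ _ _)) -rmorph_sum.
have H2E : D_H2 U V p q = \sum_i \sum_j overlap U V i j * (Num.sqrt (p i) - Num.sqrt (q j)) ^+ 2.
  rewrite /D_H2 expr2 -mulmxE mulmxBl !mulmxBr !raddfB /=.
  rewrite [\tr (mat_fun _ V q *m mat_fun _ U p)]mxtrace_mulC !tr_cross !ReC.
  have SU : \sum_i \sum_j Num.sqrt (p i) * Num.sqrt (p j) * overlap U U i j
      = \sum_i \sum_j overlap U V i j * (Num.sqrt (p i) * Num.sqrt (p i)).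
    rewrite -(@sum_same_row _ _ (fun i => Num.sqrt (p i)) _ wr).
    by apply: eq_bigr => i _; apply: eq_bigr => j _; rewrite overlap_same.
  have SV : \sum_i \sum_j Num.sqrt (q i) * Num.sqrt (q j) * overlap V V i j
      = \sum_i \sum_j overlap U V i j * (Num.sqrt (q j) * Num.sqrt (q j)).
    rewrite -(@sum_same_col _ _ (fun i => Num.sqrt (q i)) _ wc).
    by apply: eq_bigr => i _; apply: eq_bigr => j _; rewrite overlap_same.
  rewrite SU SV.
  set B := \sum_i \sum_j Num.sqrt (p i) * Num.sqrt (q j) * overlap U V i j.
  have -> : \sum_i \sum_j overlap U V i j * (Num.sqrt (p i) - Num.sqrt (q j)) ^+ 2
    = \sum_i \sum_j overlap U V i j * (Num.sqrt (p i) * Num.sqrt (p i)) - B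
      - (B - \sum_i \sum_j overlap U V i j * (Num.sqrt (q j) * Num.sqrt (q j))).
    by rewrite /B !sum2B; apply: eq_bigr => i _; apply: eq_bigr => j _; ring.
  ring.
have KLE : complex.Re (\tr (rho *m (mat_fun (@ln R) U p - mat_fun (@ln R) V q)))
    = \sum_i \sum_j overlap U V i j * (p i * ln (p i) - p i * ln (q j) - p i + q j).
  rewrite hr mat_funE mulmxBr !raddfB /= !tr_cross !ReC /=.
  have SU : \sum_i \sum_j p i * ln (p j) * overlap U U i j
      = \sum_i \sum_j overlap U V i j * (p i * ln (p i)).
    rewrite (@sum_row _ _ _ (fun i => p i * ln (p i)) wr).
    apply: eq_bigr => i _; rewrite -(@sum_delta _ _ (fun j => p i * ln (p j)) i).
    by apply: eq_bigr => j _; rewrite overlap_same.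
  have Sp : \sum_i \sum_j overlap U V i j * p i = 1.
    by rewrite (@sum_row _ _ _ p wr).
  have Sq : \sum_i \sum_j overlap U V i j * q j = 1.
    by rewrite (@sum_col _ _ _ q wc).
  have -> : \sum_i \sum_j overlap U V i j * (p i * ln (p i) - p i * ln (q j) - p i + q j)
    = \sum_i \sum_j overlap U V i j * (p i * ln (p i))
      - \sum_i \sum_j p i * ln (q j) * overlap U V i j
      - \sum_i \sum_j overlap U V i j * p i
      + \sum_i \sum_j overlap U V i j * q j.
    by rewrite !sum2B sum2D; apply: eq_bigr => i _; apply: eq_bigr => j _; ring.
  rewrite SU Sp Sq; ring.
have [bad|good] := boolP [exists i, exists j, (p i * overlap U V i j != 0) && (q j == 0)].
  case/existsP: bad => i0 /existsP [j0 /andP [hP hq]].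
  have Dinf : D_inf U V p q = +oo%E.
    apply/eqP; rewrite eq_le leey /=.
    apply: le_trans (le_bigmax _ _ i0).
    apply: le_trans (le_bigmax _ _ j0).
    by rewrite hP hq.
  have Hpos : 0 < D_H2 U V p q.
    rewrite H2E (bigD1 i0) //= (bigD1 j0) //= (eqP hq) sqrtr0 subr0 sqr_sqrtr //.
    have t0 : 0 < overlap U V i0 j0 * p i0.
      by rewrite lt_neqAle mulr_ge0 // andbT eq_sym mulrC.
    have r1 : 0 <= \sum_(j | j != j0) overlap U V i0 j * (Num.sqrt (p i0) - Num.sqrt (q j)) ^+ 2.
      by apply: sumr_ge0 => j _; rewrite mulr_ge0 ?sqr_ge0.
    have r2 : 0 <= \sum_(i | i != i0) \sum_j overlap U V i j * (Num.sqrt (p i) - Num.sqrt (q j)) ^+ 2.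
      by apply: sumr_ge0 => i _; apply: sumr_ge0 => j _; rewrite mulr_ge0 ?sqr_ge0.
    lra.
  by rewrite Dinf addey // gt0_mulye ?lte_fin // leey.
have good' : forall i j, p i * overlap U V i j != 0 -> q j != 0.
  move=> i j hP; apply/negP => /eqP hq0; move/negP: good; apply.
  by apply/existsP; exists i; apply/existsP; exists j; rewrite hP hq0 eqxx.
have hsupp := @support_ok _ _ _ _ _ _ _ _ dr ds good'.
rewrite /D_KL asboolT //.
rewrite KLE.
have [i1 [j1 [hP1 hle1]]] := @exists_good _ _ p q (overlap U V) p0 q0 w0 ps qs wr wc.
have q1 := good' _ _ hP1.
have term_eq i j : p i * overlap U V i j != 0 ->
  ((if p i * overlap U V i j != 0 then
     (if q j == 0 then +oo%E else (ln (p i / q j))%:E) else -oo%E)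
   = (ln (p i / q j))%:E).
  by move=> hP; rewrite hP (negbTE (good' _ _ hP)).
set X := D_inf U V p q.
have termX i j : p i * overlap U V i j != 0 -> ((ln (p i / q j))%:E <= X)%E.
  move=> hP; rewrite -(term_eq i j hP).
  apply: le_trans (le_bigmax _ _ i).
  exact: (le_bigmax _ _ j).
have X0 : (0 <= X)%E.
  apply: le_trans (termX _ _ hP1); rewrite lee_fin ln_ge0 //.
  have qp : 0 < q j1 by rewrite lt_neqAle eq_sym q1 q0.
  by rewrite ler_pdivlMr // mul1r.
have Xfin : X != +oo%E.
  rewrite /X /D_inf; elim/big_ind: _ => //.
    move=> x y hx hy; rewrite maxEle; by case: ifP.
  move=> i _; elim/big_ind: _ => //.
    move=> x y hx hy; rewrite maxEle; by case: ifP.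
  move=> j _; case: ifP => // hP.
  by rewrite (negbTE (good' _ _ hP)).
have [L XL] : exists L, X = L%:E.
  case hX : X => [r| |]; first by exists r.
  - by rewrite hX in Xfin.
  - by rewrite hX in X0.
have L0 : 0 <= L by rewrite -lee_fin -XL.
rewrite XL H2E -EFinD -EFinM lee_fin.
rewrite mulr_sumr; apply: ler_sum => i _.
rewrite mulr_sumr; apply: ler_sum => j _.
apply: pair_ineq => //.
move=> hP; split; first exact: good' hP.
by rewrite -lee_fin -XL; apply: termX.
Qed.
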